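(* Let $G$ be a transitive permutation group on a finite set $\Omega$, let $N$ be a normal subgroup of $G$ such that the set $\Omega/N=\{\omega^N:\omega\in\Omega\}$ of $N$-orbits has at least $2$ elements, and let $G\circlearrowright\Omega/N$ denote the permutation group induced by the natural action of $G$ on $\Omega/N$. Then \[ \mathbf{m}(G)\ge\mathbf{m}(G\circlearrowright\Omega/N). \]
   Context: For a transitive permutation group $X$ on a finite set $\Sigma$ with $|\Sigma|\ge2$, a subset $A\subseteq\Sigma$ is self-separable for $X$ if there exists $x\in X$ with $A\cap A^x=\emptyset$; $\mathbf{m}(X)$ is the minimum cardinality of a subset of $\Sigma$ that is not self-separable for $X$. *)

(* Defs.v *)
From mathcomp Require Import all_boot all_fingroup.
Set Implicit Arguments. Unset Strict Implicit. Unset Printing Implicit Defensive.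
Import GroupScope.

Definition self_separable (aT : finGroupType) (D : {set aT}) (rT : finType)
  (to : action D rT) (G : {set aT}) (A : {set rT}) : bool :=
  [exists x in G, [disjoint A & to^* A x]].

(* m(X): minimum cardinality of a subset of Sigma that is not self-separable
   for the group induced by [G] on Sigma via [to].  (Sigma itself is never
   self-separable when nonempty, so the minimum is attained; #|Sigma| is only
   the default value of the fold.) *)
Definition mnum (aT : finGroupType) (D : {set aT}) (rT : finType)
  (to : action D rT) (G : {set aT}) (Sigma : {set rT}) : nat :=
  \big[minn/#|Sigma|]_(A : {set rT} | (A \subset Sigma) && ~~ self_separable to G A) #|A|.

Definition orbits_set (T : finType) (N : {set {perm T}}) : {set {set T}} :=
  [set orbit 'P N x | x : T].

(* Main.v *)
Require Import Defs.
From mathcomp Require Import all_boot all_fingroup.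
Import GroupScope.

Lemma bigmin_le (I : finType) (P : pred I) (F : I -> nat) x0 j :
  P j -> \big[minn/x0]_(i | P i) F i <= F j.
Proof.
move=> Pj; rewrite -big_filter.
have : j \in [seq i <- index_enum I | P i] by rewrite mem_filter Pj mem_index_enum.
elim: [seq i <- index_enum I | P i] => [//|k s IH].
rewrite in_cons big_cons => /orP [/eqP <-|js]; first by rewrite geq_minl.
by rewrite geq_min IH ?orbT.
Qed.

Lemma bigmin_le0 (I : finType) (P : pred I) (F : I -> nat) x0 :
  \big[minn/x0]_(i | P i) F i <= x0.
Proof.
rewrite -big_filter; elim: [seq i <- index_enum I | P i] => [|k s IH].
  by rewrite big_nil.
by rewrite big_cons geq_min IH orbT.
Qed.

Theorem lemma3p2 (T : finType) (G N : {group {perm T}}) :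
  [transitive G, on [set: T] | 'P] ->
  N <| G ->
  2 <= #|orbits_set N| ->
  mnum ('P^*)%act G (orbits_set N) <= mnum 'P G [set: T].
Proof.
move=> _ nNG _.
rewrite /mnum.
set m := (X in X <= _).
apply: (big_ind (fun n => m <= n)).
- rewrite /m; apply: leq_trans (bigmin_le0 _ _ _ _) _.
  by rewrite /orbits_set cardsT (leq_trans (leq_imset_card _ _)) ?max_card.
- by move=> x y Hx Hy; rewrite leq_min Hx Hy.
move=> A /andP [_ nsA].
pose B := [set orbit 'P N x | x in A].
apply: (@leq_trans #|B|); last exact: leq_imset_card.
apply: bigmin_le; apply/andP; split.
  by apply/subsetP => O /imsetP [x _ ->]; apply/imsetP; exists x.
apply/negP => /existsP [g /andP [Gg dis]].
apply: (negP nsA); apply/existsP; exists g; rewrite Gg /=.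
apply/pred0P => a /=; apply/negP => /andP [aA].
rewrite setactE => /imsetP [b bA ea].
have := dis; move/pred0P/(_ (orbit 'P N (aperm b g))) => /=.
have -> : orbit 'P N (aperm b g) \in B by apply/imsetP; exists a; rewrite /= -?ea.
rewrite /= setactE.
have -> // : orbit 'P N (aperm b g) \in [set ('P^*)%act x g | x in B].
apply/imsetP; exists (orbit 'P N b); first by apply/imsetP; exists b.
by rewrite /= setact_orbit ((normalP nNG).2 g Gg).
Qed.
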